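(* Let $\mathcal X$ be a finite set (e.g. $\mathcal X=\mathcal V^L$), let $P,Q$ be probability distributions on $\mathcal X$, let $\delta>0$, let $\mathcal X_{\mathrm{Trunc}}=\{\mathbf x\in\mathcal X: Q(\mathbf x)\ge\delta\}$ and $\Delta=1-P(\mathcal X_{\mathrm{Trunc}})$, and assume $\Delta<1$. Let $P^{\mathrm{Trunc}}=P(\cdot\mid \mathcal X_{\mathrm{Trunc}})$ and $$\mathcal L^{\Delta}_{\mathrm{Trunc}}=-\mathbb E_{\mathbf x\sim P}\big[\mathbf 1_{\{Q(\mathbf x)\ge\delta\}}\log Q(\mathbf x)\big].$$ For any $\epsilon>0$, if $\mathcal L^{\Delta}_{\mathrm{Trunc}}\le \epsilon+(1-\Delta)H(P^{\mathrm{Trunc}})$, then there exists $\lambda\in(0,\infty)$ such that the precision–recall pair $(\alpha,\beta)=(\alpha_\lambda(P\Vert Q),\beta_\lambda(P\Vert Q))$ satisfies $\beta\ge (1-\Delta)-\sqrt{\epsilon}$ and $\alpha\ge 1-\sqrt{\frac{\epsilon}{2(1-\Delta)}}$.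
   Context: $H$ denotes Shannon entropy (natural logarithm). For $\lambda\in(0,\infty)$, $\alpha_\lambda(P\Vert Q)=\sum_{\mathbf x}\min(\lambda P(\mathbf x),Q(\mathbf x))$ and $\beta_\lambda(P\Vert Q)=\sum_{\mathbf x}\min(P(\mathbf x),Q(\mathbf x)/\lambda)$. When $Q$ is autoregressive on sequences, $\log Q(\mathbf x)=\sum_{l=1}^L\log Q(x_l\mid\mathbf x_{<l})$, so the loss above is the ''Trunc'' loss $-\mathbb E_{\mathbf x\sim P}[\sum_l \mathbf 1_{\{Q(\mathbf x)\ge\delta\}}\log Q(x_l\mid \mathbf x_{<l})]$. *)

(* Defs.v *)
From mathcomp Require Import all_boot all_order all_algebra.
From mathcomp Require Import reals exp.
Set Implicit Arguments. Unset Strict Implicit. Unset Printing Implicit Defensive.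
Import Order.TTheory GRing.Theory Num.Theory.
Local Open Scope ring_scope.

Section Defs.
Variables (R : realType) (T : finType).

Definition is_distr (P : T -> R) : Prop :=
  (forall x, 0 <= P x) /\ \sum_(x : T) P x = 1.

Definition entropy (P : T -> R) : R :=
  - \sum_(x : T | P x != 0) P x * ln (P x).

Definition Xtrunc (Q : T -> R) (delta : R) : {pred T} := fun x => delta <= Q x.

Definition probA (P : T -> R) (A : {pred T}) : R := \sum_(x : T | A x) P x.

Definition trunc_mass_loss (P Q : T -> R) (delta : R) : R :=
  1 - probA P (Xtrunc Q delta).

Definition cond_distr (P : T -> R) (A : {pred T}) : T -> R :=
  fun x => if A x then P x / probA P A else 0.

Definition trunc_loss (P Q : T -> R) (delta : R) : R :=
  - \sum_(x : T) P x * (if delta <= Q x then ln (Q x) else 0).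

Definition alpha_pr (lam : R) (P Q : T -> R) : R :=
  \sum_(x : T) Num.min (lam * P x) (Q x).
Definition beta_pr (lam : R) (P Q : T -> R) : R :=
  \sum_(x : T) Num.min (P x) (Q x / lam).

End Defs.

(* Main.v *)
Require Import Defs.
From mathcomp Require Import all_boot all_order all_algebra.
From mathcomp Require Import all_classical all_reals all_analysis.
From mathcomp Require Import ring lra.
Import Order.TTheory GRing.Theory Num.Theory.
Import numFieldNormedType.Exports.
Local Open Scope ring_scope.
Local Open Scope classical_set_scope.

Section G.
Variable R : realType.
Definition gfun (t : R) := ln t + 4^-1 * t^-1 + (27/4) * (t+2)^-1 - 5/2.
Definition dgfun (t : R) := t^-1 - 4^-1 * t^-2 - (27/4) * (t+2)^-2.

Lemma gfun_der (x : R) : 0 < x -> is_derive x 1 gfun (dgfun x).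
Proof.
move=> x0.
have h1 : is_derive x (1:R) (@ln R) x^-1 by apply: is_derive1_ln.
have h2 : is_derive x (1:R) (fun y : R => y^-1) (- x ^- 2 *: 1).
  apply: (@is_deriveV _ id); first by rewrite gt_eqF.
have h3 : is_derive x (1:R) (fun y : R => (y+2)^-1) (- (x+2) ^- 2 *: 1).
  have x2 : 0 < x + 2 by lra.
  apply: (@is_deriveV _ (fun y => y + 2)); first by rewrite gt_eqF.
  exact: is_derive_shift.
have := is_deriveB (is_deriveD (is_deriveD h1 (is_deriveZ (4^-1) h2)) (is_deriveZ (27/4) h3)) (is_derive_cst (5/2 : R) x 1).
rewrite /gfun /dgfun.
move=> H; apply: is_derive_eq.
rewrite [X in X%:A]/= [in X in _ = X]/= !subr0.
have E (a : R) : a%:A = a by rewrite /GRing.scale /= mulr1.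
have E2 (a b : R) : a *: b = a * b by [].
rewrite !E !E2. rewrite !invfM; ring.
Qed.

Lemma gfun1 : gfun 1 = 0.
Proof. rewrite /gfun ln1 invr1; by field. Qed.

Lemma dgfunE (c : R) : 0 < c -> dgfun c = (c - 1)^+3 / (c^+2 * (c+2)^+2).
Proof. move=> c0; have c2 : c + 2 != 0 by rewrite gt_eqF //; lra.
by rewrite /dgfun; field; rewrite c2 gt_eqF. Qed.

Lemma gfun_cont (a b : R) : 0 < a -> {within `[a, b], continuous gfun}.
Proof.
move=> a0; apply: derivable_within_continuous => x; rewrite in_itv /= => /andP[ax _].
by case: (gfun_der _ (lt_le_trans a0 ax)).
Qed.

Lemma gfun_ge0 (t : R) : 0 < t -> 0 <= gfun t.
Proof.
move=> t0; case: (leP 1 t) => t1.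
- have dI : forall x, x \in `]1, t[%R -> is_derive x 1 gfun (dgfun x).
    move=> x; rewrite in_itv /= => /andP[x1 _]; apply: gfun_der; lra.
  have [c cI E] := MVT_segment t1 dI (gfun_cont 1 t ltr01).
  move: cI; rewrite in_itv /= => /andP[c1 _].
  move: E; rewrite gfun1 subr0 => ->; apply: mulr_ge0; last lra.
  rewrite dgfunE; last lra.
  apply: divr_ge0; first by apply: exprn_ge0; lra.
  by apply: mulr_ge0; apply: sqr_ge0.
- have dI : forall x, x \in `]t, 1[%R -> is_derive x 1 gfun (dgfun x).
    move=> x; rewrite in_itv /= => /andP[x1 _]; apply: gfun_der; lra.
  have [c cI E] := MVT_segment (ltW t1) dI (gfun_cont t 1 t0).
  move: cI; rewrite in_itv /= => /andP[tc c1].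
  move: E; rewrite gfun1 sub0r => /eqP; rewrite eqr_oppLR => /eqP ->.
  rewrite -mulNr; apply: mulr_ge0; last lra.
  rewrite dgfunE; last lra.
  rewrite -mulNr; apply: divr_ge0; last by apply: mulr_ge0; apply: sqr_ge0.
  have : 0 <= 1 - c by lra.
  move=> h; have := exprn_ge0 3 h. 
  have -> : (1 - c)^+3 = - (c - 1)^+3 by ring.
  done.
Qed.

Lemma phi_lb (u v : R) : 0 < u -> 0 < v ->
  3 * (u - v)^+2 / (2 * (u + 2 * v)) <= u * ln u - u * ln v - u + v.
Proof.
move=> u0 v0.
have t0 : 0 < u / v by apply: divr_gt0.
have G := gfun_ge0 _ t0; rewrite /gfun in G.
have eL : ln u - ln v = ln (u / v).
  by rewrite lnM ?posrE ?invr_gt0 // lnV ?posrE.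
set L := ln (u / v) in eL G.
set X := 4^-1 * (u / v)^-1 + 27 / 4 * (u / v + 2)^-1 - 5/2.
have G' : 0 <= u * (L + X) by apply: mulr_ge0; [exact: ltW| rewrite /X; lra].
have uv2 : u + 2 * v != 0 by rewrite gt_eqF //; lra.
have uv2' : u + 2 * v != 0 by rewrite gt_eqF //; lra.
have eX : u * X = - u + v - 3 * (u - v)^+2 / (2 * (u + 2 * v)).
  by rewrite /X; field; rewrite uv2 !gt_eqF.
rewrite mulrDr eX in G'.
have : u * ln u - u * ln v = u * L by rewrite -eL mulrBr.
lra.
Qed.

Lemma aux (w c s phi : R) : 0 < c -> 0 < s -> 3 * w^+2 / (2 * c) <= phi ->
  `|w| <= phi / (2 * s) + s * c / 3.
Proof.
move=> c0 s0 h.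
have h2 : 3 * w^+2 / (2 * c) / (2 * s) <= phi / (2 * s).
  by apply: ler_wpM2r => //; rewrite invr_ge0; lra.
suff : `|w| <= 3 * w^+2 / (2 * c) / (2 * s) + s * c / 3 by lra.
rewrite -real_normK ?num_real //.
set a := `|w|.
have E : 3 * a^+2 / (2 * c) / (2 * s) + s * c / 3 - a = (3 * a - 2 * s * c)^+2 / (12 * c * s).
  by field; rewrite !gt_eqF.
have : 0 <= (3 * a - 2 * s * c)^+2 / (12 * c * s).
  by apply: divr_ge0; [apply: sqr_ge0| apply: mulr_ge0; [apply: mulr_ge0|]; lra].
lra.
Qed.

Lemma term_bd (u v s : R) : 0 <= u -> 0 < v -> 0 < s ->
  `|u - v| <= (2*s)^-1 * (u * ln u - u * ln v) + (s/3 - (2*s)^-1) * u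
              + ((2*s)^-1 + 2*s/3) * v.
Proof.
move=> u0 v0 s0.
have -> : (2*s)^-1 * (u * ln u - u * ln v) + (s/3 - (2*s)^-1) * u
              + ((2*s)^-1 + 2*s/3) * v =
   (u * ln u - u * ln v - u + v) / (2 * s) + s * (u + 2 * v) / 3 by ring.
apply: aux; [lra | exact: s0 |].
case: (ltrgt0P u) u0 => // [up|->] _; first exact: phi_lb.
have -> : 3 * (0 - v)^+2 / (2 * (0 + 2 * v)) = 3 * v / 4.
  by field; rewrite gt_eqF.
rewrite !mul0r; lra.
Qed.
End G.

Theorem proposition5p2 (R : realType) (T : finType) (P Q : T -> R) (delta eps : R) :
  is_distr P -> is_distr Q -> 0 < delta ->
  trunc_mass_loss P Q delta < 1 ->
  0 < eps ->
  trunc_loss P Q delta <=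
    eps + (1 - trunc_mass_loss P Q delta) * entropy (cond_distr P (Xtrunc Q delta)) ->
  exists lam : R, 0 < lam /\
    beta_pr lam P Q >= (1 - trunc_mass_loss P Q delta) - Num.sqrt eps /\
    alpha_pr lam P Q >=
      1 - Num.sqrt (eps / (2 * (1 - trunc_mass_loss P Q delta))).
Proof.
move=> [P0 P1] [Q0 Q1] d0 hD e0 hL.
set A := Xtrunc Q delta in hD hL *.
have ep : 1 - trunc_mass_loss P Q delta = probA P A by rewrite /trunc_mass_loss; lra.
rewrite ep in hL *; rewrite /trunc_mass_loss in hD.
set p := probA P A in hD hL ep *.
have p0 : 0 < p by lra.
have pn0 : p != 0 by rewrite gt_eqF.
have p1 : p <= 1.
  rewrite -P1 /p /probA [X in _ <= X](bigID A) /=.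
  have : 0 <= \sum_(x | ~~ A x) P x by apply: sumr_ge0.
  lra.
set s := Num.sqrt (eps / (2 * p)).
have s0 : 0 < s by rewrite sqrtr_gt0 divr_gt0 // mulr_gt0.
have s2 : s^+2 = eps / (2 * p) by rewrite sqr_sqrtr // ltW // divr_gt0 // mulr_gt0.
have U1 : \sum_(x | A x) P x / p = 1 by rewrite -mulr_suml divff.
set V := \sum_(x | A x) Q x.
have V1 : V <= 1.
  rewrite -Q1 /V [X in _ <= X](bigID A) /=.
  have : 0 <= \sum_(x | ~~ A x) Q x by apply: sumr_ge0.
  lra.
have QA : forall x, A x -> 0 < Q x.
  by move=> x Ax; apply: lt_le_trans d0 Ax.
set D := \sum_(x | A x) (P x / p * ln (P x / p) - P x / p * ln (Q x)).
have hDle : D <= 2 * s^+2.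
  have eH : entropy (cond_distr P A) = - \sum_(x | A x) P x / p * ln (P x / p).
    rewrite /entropy big_mkcond [in RHS]big_mkcond /=; congr (- _).
    apply: eq_bigr => x _; rewrite /cond_distr -/p.
    case: (A x) => /=; last by rewrite eqxx.
    by case: eqP => [->|]; rewrite ?mul0r.
  have eL : trunc_loss P Q delta = - \sum_(x | A x) P x * ln (Q x).
    rewrite /trunc_loss [in RHS]big_mkcond; congr (- _); apply: eq_bigr => x _.
    rewrite /A /Xtrunc /=; case: (delta <= Q x); by rewrite ?mulr0.
  have eD : D = \sum_(x | A x) P x / p * ln (P x / p) - p^-1 * \sum_(x | A x) P x * ln (Q x).
    rewrite /D sumrB mulr_sumr; congr (_ - _); apply: eq_bigr => x _.
    by rewrite mulrA (mulrC p^-1).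
  have pD : p * D = p * \sum_(x | A x) P x / p * ln (P x / p) - \sum_(x | A x) P x * ln (Q x).
    by rewrite eD mulrBr mulrA divff // mul1r.
  rewrite eH eL in hL.
  have hpD : p * D <= eps by lra.
  have -> : 2 * s^+2 = eps / p by rewrite s2; field.
  by rewrite ler_pdivlMr // mulrC.
have hN : \sum_(x | A x) `|P x / p - Q x| <= (2*s)^-1 * D
     + (s/3 - (2*s)^-1) * \sum_(x | A x) P x / p + ((2*s)^-1 + 2*s/3) * V.
  rewrite /D /V !mulr_sumr -!big_split /=; apply: ler_sum => x Ax.
  by apply: term_bd => //; [apply: divr_ge0 => //; exact: ltW | exact: QA].
rewrite U1 in hN.
set N := \sum_(x | A x) `|P x / p - Q x| in hN.
have hM : 2^-1 * \sum_(x | A x) P x / p + 2^-1 * V - 2^-1 * N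
     <= \sum_(x | A x) Num.min (P x / p) (Q x).
  rewrite /N /V !mulr_sumr -big_split -sumrB /=; apply: ler_sum => x _.
  set a := P x / p; set b := Q x.
  rewrite /Num.min; case: ltP => h; [rewrite ltr0_norm; last lra | rewrite ger0_norm; last lra]; lra.
rewrite U1 in hM.
have hdum : 1 - V <= (2*s)^-1 * (1 - V) + 2 * s * (1 - V) / 3.
  have E : (2*s)^-1 * (1 - V) + 2 * s * (1 - V) / 3 - (1 - V) =
     (1 - V) * ((2 * s - 3/2)^+2 + 3/4) / (6 * s) by field; rewrite gt_eqF.
  have : 0 <= (1 - V) * ((2 * s - 3/2)^+2 + 3/4) / (6 * s).
    apply: divr_ge0; last lra.
    apply: mulr_ge0; first lra.
    have := sqr_ge0 (2 * s - 3/2); lra.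
  lra.
have h1 : (2*s)^-1 * D <= (2*s)^-1 * (2 * s^+2) by apply: ler_wpM2l => //; rewrite invr_ge0; lra.
have h2 : (2*s)^-1 * (2 * s^+2) = s by field; rewrite gt_eqF.
have hMs : 1 - s <= \sum_(x | A x) Num.min (P x / p) (Q x) by lra.
exists p^-1; split; first by rewrite invr_gt0.
split.
- rewrite /beta_pr (bigID A) /=.
  have : 0 <= \sum_(x | ~~ A x) Num.min (P x) (Q x / p^-1).
    apply: sumr_ge0 => x _; rewrite /Num.min; case: ifP => _ //; apply: divr_ge0 => //.
    by rewrite invr_ge0 ltW.
  have -> : \sum_(x | A x) Num.min (P x) (Q x / p^-1) =
      p * \sum_(x | A x) Num.min (P x / p) (Q x).
    rewrite mulr_sumr; apply: eq_bigr => x _; rewrite minr_pMr ?ltW // invrK.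
    by rewrite [p * (_ / _)]mulrC divfK // [p * _]mulrC.
  have hps : p * s <= Num.sqrt eps.
    have E : (p * s)^+2 = p * eps / 2 by rewrite exprMn s2; field.
    rewrite -[p * s]ger0_norm; last by apply: mulr_ge0; apply: ltW.
    rewrite -sqrtr_sqr ler_sqrt; last exact: ltW.
    rewrite E; have : 0 <= eps * (1 - p) by apply: mulr_ge0; lra.
    lra.
  have : p * (1 - s) <= p * \sum_(x | A x) Num.min (P x / p) (Q x).
    by apply: ler_wpM2l => //; exact: ltW.
  lra.
- rewrite /alpha_pr (bigID A) /=.
  have : 0 <= \sum_(x | ~~ A x) Num.min (p^-1 * P x) (Q x).
    apply: sumr_ge0 => x _; rewrite /Num.min; case: ifP => _ //; apply: mulr_ge0 => //.
    by rewrite invr_ge0 ltW.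
  have -> : \sum_(x | A x) Num.min (p^-1 * P x) (Q x) =
      \sum_(x | A x) Num.min (P x / p) (Q x).
    by apply: eq_bigr => x _; rewrite mulrC.
  lra.
Qed.
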